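(* Let $L\ge1$ and $q\in\{2,\dots,L\}$ be integers, $\delta\in(0,1)$, $k=\lceil L/\delta\rceil$, and $s,d\ge1$. Let $I$ be an $(s,d)$-decent instance of Min Weight Generalized Domination with Gaifman graph $G$ and minimum solution cost $\mathsf{OPT}$. Let $V_0,\dots,V_{k-1}\subseteq V(G)$ be such that $N_G[V_0],\dots,N_G[V_{k-1}]$ are pairwise disjoint, let $I_i=\mathsf{Clear}(I;V_i)$ with minimum solution cost $\mathsf{OPT}_i$, and let reals $p_i$ satisfy $(1-\delta\frac{q-1}{L})\mathsf{OPT}_i\le p_i\le\mathsf{OPT}_i$ for every $i$. Then $p=\max(p_0,\dots,p_{k-1})$ satisfies $(1-\delta\frac{q}{L})\mathsf{OPT}\le p\le\mathsf{OPT}$.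
   Context: An instance of Min Weight Generalized Domination consists of a loopless multigraph $G$ and for every vertex $u$: a finite domain $D_u$, $\mathsf{cost}_u\colon D_u\to\mathbb{R}_{\ge0}\cup\{+\infty\}$, and $\mathsf{supply}_u,\mathsf{demand}_u\colon D_u\to 2^{\delta(u)}$ ($\delta(u)$ = edges incident to $u$), with some $s_u\in D_u$ having $\mathsf{supply}_u(s_u)=\delta(u)$ and finite cost. A solution is $\phi$ with $\phi(u)\in D_u$ such that for every edge $e$ with endpoints $u,v$, $e\in\mathsf{demand}_u(\phi(u))\Rightarrow e\in\mathsf{supply}_v(\phi(v))$ and $e\in\mathsf{demand}_v(\phi(v))\Rightarrow e\in\mathsf{supply}_u(\phi(u))$; cost $\sum_u\mathsf{cost}_u(\phi(u))$. A vertex is $(s,d)$-meager if $|\delta(u)|\le s$ and $|D_u|\le d$; state-monotonous if for all ordered $x_1,x_2\in D_u$ there is $x\in D_u$ with $\mathsf{cost}_u(x)\le\mathsf{cost}_u(x_1)+\mathsf{cost}_u(x_2)$, $\mathsf{supply}_u(x)=\mathsf{supply}_u(x_1)\cup\mathsf{supply}_u(x_2)$, $\mathsf{demand}_u(x)\subseteq\mathsf{demand}_u(x_1)$; $(s,d)$-decent means all vertices are $(s,d)$-meager and state-monotonous. $N_G[A]$ is the closed neighborhood of $A$. $\mathsf{Clear}(I;A)$ is obtained by deleting all edges with both endpoints in $A$ (also from supply and demand sets) and then setting $\mathsf{demand}_u(x)=\emptyset$ for all $u\in A$, $x\in D_u$. *)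

(* Defs.v *)
From HB Require Import structures.
From mathcomp Require Import all_boot all_order all_algebra.
From mathcomp Require Import constructive_ereal reals.
Set Implicit Arguments. Unset Strict Implicit. Unset Printing Implicit Defensive.
Import Order.TTheory GRing.Theory Num.Theory.
Local Open Scope ring_scope.
Local Open Scope ereal_scope.

(* V : vertices, E : edge identifiers (multigraph: parallel edges allowed),
   St : a common finite carrier of states; the domain of u is [dom u].
   Only the edges in [edges] are present in the multigraph; [end1 e], [end2 e]
   are the two endpoints of e. *)
Record Instance (R : realType) (V E St : finType) := MkInstance {
  edges  : {set E};
  end1   : E -> V;
  end2   : E -> V;
  dom    : V -> {set St};
  cost   : V -> St -> \bar R;
  supply : V -> St -> {set E};
  demand : V -> St -> {set E}
}.

Section Defs.
Context {R : realType} {V E St : finType}.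
Implicit Types (I : Instance R V E St) (A : {set V}).

Definition inc I (u : V) : {set E} :=
  [set e in edges I | (end1 I e == u) || (end2 I e == u)].

Definition wf_instance I : Prop :=
  [/\ forall e, e \in edges I -> end1 I e != end2 I e,
      forall u x, x \in dom I u -> 0 <= cost I u x,
      forall u x, x \in dom I u -> supply I u x \subset inc I u,
      forall u x, x \in dom I u -> demand I u x \subset inc I u &
      forall u, exists2 s, s \in dom I u &
         supply I u s = inc I u /\ cost I u s < +oo].

Definition is_solution I (phi : {ffun V -> St}) : bool :=
  [forall u, phi u \in dom I u] &&
  [forall e in edges I,
     ((e \in demand I (end1 I e) (phi (end1 I e))) ==>
        (e \in supply I (end2 I e) (phi (end2 I e)))) &&
     ((e \in demand I (end2 I e) (phi (end2 I e))) ==>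
        (e \in supply I (end1 I e) (phi (end1 I e))))].

Definition sol_cost I (phi : {ffun V -> St}) : \bar R :=
  \sum_(u : V) cost I u (phi u).

Definition OPT I : \bar R :=
  \big[mine/+oo]_(phi : {ffun V -> St} | is_solution I phi) sol_cost I phi.

Definition meager I (s d : nat) (u : V) : Prop :=
  (#|inc I u| <= s)%N /\ (#|dom I u| <= d)%N.

Definition state_monotonous I (u : V) : Prop :=
  forall x1 x2, x1 \in dom I u -> x2 \in dom I u ->
    exists2 x, x \in dom I u &
      [/\ cost I u x <= cost I u x1 + cost I u x2,
          supply I u x = supply I u x1 :|: supply I u x2 &
          demand I u x \subset demand I u x1].

Definition decent I (s d : nat) : Prop :=
  forall u, meager I s d u /\ state_monotonous I u.

Definition gadj I (u v : V) : bool :=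
  [exists e in edges I, ((end1 I e == u) && (end2 I e == v)) ||
                        ((end1 I e == v) && (end2 I e == u))].

Definition closed_nbh I A : {set V} :=
  A :|: [set v | [exists a in A, gadj I a v]].

Definition Clear I A : Instance R V E St :=
  let E' := [set e in edges I | ~~ ((end1 I e \in A) && (end2 I e \in A))] in
  MkInstance E' (end1 I) (end2 I) (dom I) (cost I)
    (fun u x => supply I u x :&: E')
    (fun u x => if u \in A then set0 else demand I u x :&: E').

End Defs.

(* Main.v *)
Require Import Defs.
From HB Require Import structures.
From mathcomp Require Import all_boot all_order all_algebra.
From mathcomp Require Import constructive_ereal reals ring lra.
Import Order.TTheory GRing.Theory Num.Theory.
Local Open Scope ring_scope.

Lemma arith (R : realType) (d Lr m kr c o r pv : R) : 0 < d -> d < 1 -> 1 <= Lr -> m + 1 <= Lr -> 0 <= m ->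
  Lr / d <= kr -> kr * c <= o -> 0 <= c -> 0 <= o -> o <= r + c ->
  (1 - d * m / Lr) * r <= pv -> (1 - d * (m + 1) / Lr) * o <= pv.
Proof.
move=> d0 d1 L1 mL m0 Lk kc c0 o0 orc hp.
have L0 : 0 < Lr by lra.
set X := d / Lr.
have X0 : 0 < X by rewrite /X divr_gt0.
have e1 : d * m / Lr = m * X by rewrite /X; ring.
have e2 : d * (m + 1) / Lr = m * X + X by rewrite /X; ring.
have eX : Lr / d = X^-1 by rewrite /X invf_div.
have hc : c <= X * o.
  have h1 : X^-1 * c <= o by apply: le_trans kc; rewrite -eX ler_wpM2r.
  have -> : c = X * (X^-1 * c) by rewrite mulrA divff ?mul1r // gt_eqF.
  by rewrite ler_wpM2l // ltW.
have hY : m * X <= d - X.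
  have -> : d - X = (Lr - 1) * X by rewrite /X; field; rewrite gt_eqF.
  apply: ler_wpM2r; [exact: ltW | lra].
rewrite e1 in hp; rewrite e2.
have Y0 : 0 <= m * X by rewrite mulr_ge0 // ltW.
have h3 : 0 <= (1 - m * X) * (r - (o - c)) by rewrite mulr_ge0 //; lra.
have h4 : 0 <= m * X * c by rewrite mulr_ge0.
nra.
Qed.

Section H.
Set Implicit Arguments. Unset Strict Implicit.
Context {R : realType} {V E St : finType}.
Implicit Types (I : Instance R V E St) (A : {set V}).
Local Open Scope ereal_scope.

Lemma sol_clear I A phi : is_solution I phi -> is_solution (Clear I A) phi.
Proof.
case/andP=> Hd /forall_inP He; apply/andP; split => //.
apply/forall_inP => e; rewrite inE => /andP[eI nA].
have /andP[h1 h2] := He e eI; apply/andP; split; apply/implyP => /=.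
- case: ifP => _; first by rewrite in_set0.
  rewrite inE => /andP[/(implyP h1) H _]; rewrite inE H inE eI nA //.
- case: ifP => _; first by rewrite in_set0.
  rewrite inE => /andP[/(implyP h2) H _]; rewrite inE H inE eI nA //.
Qed.

Lemma sol_exists I : wf_instance I -> exists phi, is_solution I phi /\ sol_cost I phi < +oo.
Proof.
case=> _ _ _ _ Hs.
have : forall u, exists x, x \in dom I u /\ (supply I u x = inc I u /\ cost I u x < +oo).
  by move=> u; case: (Hs u) => x a b; exists x.
case/fin_all_exists => f Hf.
exists [ffun u => f u]; split.
- apply/andP; split; first by apply/forallP => u; rewrite ffunE; case: (Hf u).
  apply/forall_inP => e eI; rewrite !ffunE.
  move: (Hf (end1 I e)) (Hf (end2 I e)) => [_ [-> _]] [_ [-> _]].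
  by rewrite !inE eI !eqxx !orbT !implybT.
- rewrite /sol_cost; apply: lte_sum_pinfty => u _; rewrite ffunE.
  by case: (Hf u) => _ [].
Qed.

Lemma cost_ge0 I phi : (forall u x, x \in dom I u -> 0 <= cost I u x) ->
  is_solution I phi -> 0 <= sol_cost I phi.
Proof.
move=> H /andP[/forallP Hd _]; apply: sume_ge0 => u _; exact: H.
Qed.

Lemma opt_le I phi : is_solution I phi -> OPT I <= sol_cost I phi.
Proof. by move=> Hp; rewrite /OPT; apply: bigmin_le_cond. Qed.

Lemma opt_attained I phi0 : is_solution I phi0 ->
  exists phi, is_solution I phi /\ OPT I = sol_cost I phi.
Proof.
move=> H0; rewrite /OPT (bigmin_eq_arg _ _ _ _ H0); last by move=> *; exact: leey.
case: arg_minP => //= i Pi _; by exists i.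
Qed.
Definition ends I e x y := (end1 I e == x) && (end2 I e == y) || (end1 I e == y) && (end2 I e == x).

Lemma sol_dir I phi e x y : is_solution I phi -> e \in edges I -> ends I e x y ->
  e \in demand I x (phi x) -> e \in supply I y (phi y).
Proof.
case/andP=> _ /forall_inP He eI; have /andP[h1 h2] := He e eI.
by case/orP=> /andP[/eqP<- /eqP<-]; [move/(implyP h1)|move/(implyP h2)].
Qed.


Lemma clear_dir I A psi e x y : is_solution (Clear I A) psi -> e \in edges I ->
  ends I e x y -> x \notin A ->
  e \in demand I x (psi x) -> e \in supply I y (psi y).
Proof.
move=> Hs eI exy xA hd.
have eE : e \in edges (Clear I A).
  rewrite /= inE eI /=; case/orP: exy => /andP[/eqP-> /eqP->];
  by rewrite (negbTE xA) ?andbF.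
have := sol_dir Hs eE exy; rewrite /= (negbTE xA) inE hd eE => /(_ isT).
by rewrite inE => /andP[].
Qed.

Lemma ends_nbh I A e x y : e \in edges I -> ends I e x y -> x \in A ->
  y \in closed_nbh I A.
Proof.
move=> eI exy xA; rewrite /closed_nbh !inE; apply/orP; right.
apply/existsP; exists x; rewrite xA /=; apply/existsP; exists e; rewrite eI /=.
by rewrite /ends in exy.
Qed.

Lemma key I A phi psi : (forall u, state_monotonous I u) -> is_solution I phi ->
  is_solution (Clear I A) psi ->
  OPT I <= sol_cost I psi + \sum_(u in closed_nbh I A) cost I u (phi u).
Proof.
move=> Hm Hphi Hpsi.
have dphi : forall u, phi u \in dom I u by case/andP: Hphi => /forallP.
have dpsi : forall u, psi u \in dom I u by case/andP: Hpsi => /forallP.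
have : forall u, exists y, if u \in closed_nbh I A then
   [/\ y \in dom I u, cost I u y <= cost I u (psi u) + cost I u (phi u),
       supply I u (psi u) \subset supply I u y, supply I u (phi u) \subset supply I u y &
       demand I u y \subset (if u \in A then demand I u (phi u) else demand I u (psi u))]
   else y = psi u.
  move=> u; case uN: (u \in closed_nbh I A); last by exists (psi u).
  case: (boolP (u \in A)) => uA.
  - have [y yd [c1 s1 d1]] := Hm u _ _ (dphi u) (dpsi u).
    by exists y; split => //; rewrite ?s1 ?subsetUl ?subsetUr // addeC.
  - have [y yd [c1 s1 d1]] := Hm u _ _ (dpsi u) (dphi u).
    by exists y; split => //; rewrite ?s1 ?subsetUl ?subsetUr.
case/fin_all_exists => f Hf.
pose chi := [ffun u => f u].
have S1 : forall u, supply I u (psi u) \subset supply I u (chi u).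
  move=> u; rewrite ffunE; move: (Hf u); case: ifP => _; first by case.
  by move=> ->.
have S2 : forall u, u \in closed_nbh I A -> supply I u (phi u) \subset supply I u (chi u).
  move=> u uN; rewrite ffunE; move: (Hf u); rewrite uN; by case.
have D1 : forall u, u \notin A -> demand I u (chi u) \subset demand I u (psi u).
  move=> u uA; rewrite ffunE; move: (Hf u); case: ifP => _; last by move=> ->.
  by case=> _ _ _ _; rewrite (negbTE uA).
have D2 : forall u, u \in A -> demand I u (chi u) \subset demand I u (phi u).
  move=> u uA; rewrite ffunE; move: (Hf u).
  have -> : u \in closed_nbh I A by rewrite /closed_nbh inE uA.
  by case=> _ _ _ _; rewrite uA.
have dir : forall e x y, e \in edges I -> ends I e x y ->
    e \in demand I x (chi x) -> e \in supply I y (chi y).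
  move=> e x y eI exy hd; case: (boolP (x \in A)) => xA.
  - apply: (subsetP (S2 _ (ends_nbh eI exy xA))).
    exact: (sol_dir Hphi eI exy (subsetP (D2 _ xA) _ hd)).
  - apply: (subsetP (S1 _)).
    exact: (clear_dir Hpsi eI exy xA (subsetP (D1 _ xA) _ hd)).
have Hchi : is_solution I chi.
  apply/andP; split.
    apply/forallP => u; rewrite ffunE; move: (Hf u); case: ifP => _; first by case.
    by move=> ->.
  apply/forall_inP => e eI; apply/andP; split; apply/implyP; apply: dir => //.
  - by rewrite /ends !eqxx.
  - by rewrite /ends !eqxx orbT.

apply: (le_trans (opt_le Hchi)).
rewrite /sol_cost (big_mkcond (fun u => u \in closed_nbh I A)) /= -big_split /=.
apply: lee_sum => u _; rewrite ffunE; move: (Hf u); case: ifP => _.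
  by case.
by move=> ->; rewrite adde0.
Qed.
End H.

Theorem lemma4p10 (R : realType) (V E St : finType)
  (L q : nat) (delta : R) (k : nat) (s d : nat)
  (I : Instance R V E St) (Vs : 'I_k -> {set V}) (p : 'I_k -> R) :
  (1 <= L)%N -> (2 <= q <= L)%N ->
  0 < delta < 1 ->
  (k : int) = Num.ceil (L%:R / delta) ->
  (1 <= s)%N -> (1 <= d)%N ->
  wf_instance I -> decent I s d ->
  (forall i j : 'I_k, i != j ->
     [disjoint closed_nbh I (Vs i) & closed_nbh I (Vs j)]) ->
  (forall i : 'I_k,
     ((1 - delta * (q.-1)%:R / L%:R)%:E * OPT (Clear I (Vs i)) <= (p i)%:E)%E /\
     ((p i)%:E <= OPT (Clear I (Vs i)))%E) ->
  ((1 - delta * q%:R / L%:R)%:E * OPT I <= \big[maxe/-oo]_(i < k) (p i)%:E)%E /\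
  (\big[maxe/-oo]_(i < k) (p i)%:E <= OPT I)%E.
Proof.
move=> L1 /andP[q2 qL] /andP[d0 d1] hk _ _ wf dec disj hp.
have wf' := wf; case: wf' => _ Hc _ _ _.
have Hm : forall u, state_monotonous I u by move=> u; case: (dec u).
have [phi0 [Hphi0 fin0]] := sol_exists wf.
have [phi [Hphi Hopt]] := opt_attained Hphi0.
have OPT0 : (0 <= OPT I)%E by rewrite Hopt; exact: cost_ge0 Hc Hphi.
have OPTf : (OPT I < +oo)%E by apply: le_lt_trans (opt_le Hphi0) fin0.
have [o Ho] : exists o, OPT I = o%:E.
  by move: OPT0 OPTf; case: (OPT I) => // r _ _; exists r.
have o0 : 0 <= o by rewrite -lee_fin -Ho.
have OPTi : forall i, (OPT (Clear I (Vs i)) <= OPT I)%E.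
  by move=> i; rewrite Hopt; apply: opt_le; exact: sol_clear.
split; last first.
  apply: bigmax_le => [|i _]; first exact: leNye.
  by apply: le_trans (OPTi i); case: (hp i).
pose c i := (\sum_(u in closed_nbh I (Vs i)) cost I u (phi u))%E.
have c0 : forall i, (0 <= c i)%E.
  move=> i; apply: sume_ge0 => u _; apply: Hc; by case/andP: Hphi => /forallP.
have csum : (\sum_i c i <= OPT I)%E.
  rewrite /c -(partition_disjoint_bigcup (F := fun i => closed_nbh I (Vs i)) _ (fun u => cost I u (phi u)) disj).
  rewrite Hopt /sol_cost [leRHS](bigID (fun u => u \in \bigcup_i closed_nbh I (Vs i))) /=.
  apply: lee_paddr; last exact: lexx.
  apply: sume_ge0 => u _; apply: Hc.
  by case/andP: Hphi => /forallP.
have cle : forall i, (c i <= OPT I)%E.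
  move=> i; apply: le_trans csum; rewrite (bigD1 i) //=.
  by apply: lee_paddr => //; apply: sume_ge0 => j _.
have cE : forall i, c i = (fine (c i))%:E.
  move=> i; have := c0 i; have := cle i; rewrite Ho.
  by case: (c i).
pose cr i := fine (c i).
have cr0 : forall i, 0 <= cr i by move=> i; rewrite -lee_fin -cE.
have crsum : \sum_i cr i <= o.
  by rewrite -lee_fin -sumEFin -Ho; under eq_bigr do rewrite -cE.
have kL : L%:R / delta <= k%:R :> R.
  apply: le_trans (ceil_ge _) _; rewrite -hk //.
have kpos : (0 < k)%N.
  have : 0 < k%:R :> R.
    apply: lt_le_trans kL; by rewrite divr_gt0 // ltr0n.
  by rewrite ltr0n.
pose i0 := Ordinal kpos.
pose im := Order.arg_min i0 xpredT cr.
have kc : k%:R * cr im <= o.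
  apply: le_trans crsum.
  have -> : k%:R * cr im = \sum_(i < k) cr im by rewrite sumr_const card_ord mulr_natl.
  rewrite /im; case: arg_minP => // j _ Hj.
  by apply: ler_sum => i _; apply: Hj.
have [psi [Hpsi Hopsi]] := opt_attained (sol_clear (Vs im) Hphi).
have Kk := key Hm Hphi Hpsi.
have Oi0 : (0 <= OPT (Clear I (Vs im)))%E by rewrite Hopsi; apply: (cost_ge0 _ Hpsi); exact: Hc.
have [r Hr] : exists r, OPT (Clear I (Vs im)) = r%:E.
  by move: Oi0 (OPTi im); rewrite Ho; case: (OPT _) => // r _ _; exists r.
have orc : o <= r + cr im.
  by rewrite -lee_fin EFinD -Hr -Ho /cr -cE Hopsi.
have [hp1 _] := hp im.
rewrite Hr -EFinM lee_fin in hp1.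
rewrite Ho -EFinM; apply: le_trans (le_bigmax _ _ im); rewrite lee_fin.
have qm : q = q.-1.+1 by rewrite prednK // ltnW.
rewrite [in X in delta * X]qm -natr1.
apply: (@arith _ _ _ _ _ _ _ _ _ d0 d1 _ _ _ kL kc (cr0 im) o0 orc hp1).
- by rewrite ler1n.
- by rewrite natr1 ler_nat -qm.
- exact: ler0n.
Qed.
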